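(* Let $\Lambda:\mathcal{B}(\mathcal{H}_d)\to\mathcal{B}(\mathcal{H}_d)$ be a quantum operation with $\Lambda^\dagger[I]\neq 0$. Let $\Pi_0$ be the projector onto the kernel of $\Lambda^\dagger[I]$, let $(\Lambda^\dagger[I])^{-1/2}$ be defined via the Moore–Penrose inverse, and let $\xi$ be an arbitrary density operator in the set $\Lambda_{\mathcal{D}}[\mathcal{D}(\mathcal{H}_d)]=\{\Lambda_{\mathcal D}[\rho]:\rho\in\mathcal{D}(\mathcal{H}_d),\ \mathrm{tr}\Lambda[\rho]\neq0\}$. Then the map $$\Phi_\Lambda[\rho]=\Lambda\big[(\Lambda^\dagger[I])^{-1/2}\rho(\Lambda^\dagger[I])^{-1/2}\big]+\mathrm{tr}[\rho\,\Pi_0]\,\xi$$ is a quantum channel and $\Lambda_{\mathcal{D}}[\mathcal{D}(\mathcal{H}_d)]=\Phi_\Lambda[\mathcal{D}(\mathcal{H}_d)]$.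
   Context: $\mathcal{H}_d$ is a Hilbert space of finite dimension $d>1$ and $\mathcal{D}(\mathcal{H}_d)$ is the set of density operators on it. A quantum operation is a completely positive linear map $\Lambda$ on $\mathcal{B}(\mathcal{H}_d)$ with $\Lambda^\dagger[I]\le I$, where $\Lambda^\dagger$ is the dual map ($\mathrm{tr}[\Lambda[X]Y]=\mathrm{tr}[X\Lambda^\dagger[Y]]$). A quantum channel is a completely positive trace preserving map. The normalized (nonlinear) map is $\Lambda_{\mathcal{D}}[\rho]=\Lambda[\rho]/\mathrm{tr}\big[\Lambda[\rho]\big]$, defined for those $\rho\in\mathcal{D}(\mathcal{H}_d)$ with $\mathrm{tr}[\Lambda[\rho]]\neq 0$. *)

(* Defs.v *)
From HB Require Import structures.
From mathcomp Require Import all_boot all_order all_algebra.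
Set Implicit Arguments. Unset Strict Implicit. Unset Printing Implicit Defensive.
Import Order.TTheory GRing.Theory Num.Theory Num.Def.
Local Open Scope ring_scope.
Local Open Scope sesquilinear_scope.

Section QDefs.
Variable C : numClosedFieldType.

Definition adjmx m n (A : 'M[C]_(m, n)) : 'M[C]_(n, m) := A ^t conjC.

Definition psdmx n (A : 'M[C]_n) : Prop :=
  forall v : 'rV[C]_n, 0 <= (v *m A *m adjmx v) 0 0.

Definition loewner_le n (A B : 'M[C]_n) : Prop := psdmx (B - A).

Definition density n (rho : 'M[C]_n) : Prop := psdmx rho /\ \tr rho = 1.

Definition linmap d (L : 'M[C]_d -> 'M[C]_d) : Prop :=
  forall (a : C) (X Y : 'M[C]_d), L (a *: X + Y) = a *: L X + L Y.

(* positivity of an element of M_n (x) M_d, given as an n x n block matrix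
   X with blocks X i j in M_d *)
Definition psd_block n d (X : 'I_n -> 'I_n -> 'M[C]_d) : Prop :=
  forall v : 'I_n -> 'rV[C]_d,
    0 <= \sum_(i < n) \sum_(j < n) (v i *m X i j *m adjmx (v j)) 0 0.

(* complete positivity: id_n (x) L is positive for every n *)
Definition completely_positive d (L : 'M[C]_d -> 'M[C]_d) : Prop :=
  forall (n : nat) (X : 'I_n -> 'I_n -> 'M[C]_d),
    psd_block X -> psd_block (fun i j => L (X i j)).

Definition is_dual d (L Ld : 'M[C]_d -> 'M[C]_d) : Prop :=
  forall X Y : 'M[C]_d, \tr (L X *m Y) = \tr (X *m Ld Y).

Definition quantum_operation d (L Ld : 'M[C]_d -> 'M[C]_d) : Prop :=
  [/\ linmap L, completely_positive L, is_dual L Ld & loewner_le (Ld 1%:M) 1%:M].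

Definition quantum_channel d (L : 'M[C]_d -> 'M[C]_d) : Prop :=
  [/\ linmap L, completely_positive L & forall X, \tr (L X) = \tr X].

Definition normalized d (L : 'M[C]_d -> 'M[C]_d) (rho : 'M[C]_d) : 'M[C]_d :=
  (\tr (L rho))^-1 *: L rho.

Definition normalized_image d (L : 'M[C]_d -> 'M[C]_d) (xi : 'M[C]_d) : Prop :=
  exists rho, [/\ density rho, \tr (L rho) != 0 & xi = normalized L rho].

(* functional calculus for a normal (here: Hermitian) matrix via the spectral
   decomposition A = P^-1 diag(D) P of mathcomp's spectral.v *)
Definition mxfun n (f : C -> C) (A : 'M[C]_n) : 'M[C]_n :=
  invmx (spectralmx A) *m diag_mx (map_mx f (spectral_diag A)) *m spectralmx A.

(* (A^+)^{1/2}: inverse square root through the Moore-Penrose inverse,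
   i.e. eigenvalue x |-> x^{-1/2} if x <> 0 and 0 if x = 0 *)
Definition mp_invsqrt n (A : 'M[C]_n) : 'M[C]_n :=
  mxfun (fun x => if x == 0 then 0 else (sqrtC x)^-1) A.

Definition ker_proj n (A : 'M[C]_n) : 'M[C]_n := proj_ortho (kermx A).

Definition Phi d (L Ld : 'M[C]_d -> 'M[C]_d) (xi : 'M[C]_d) (rho : 'M[C]_d)
  : 'M[C]_d :=
  L (mp_invsqrt (Ld 1%:M) *m rho *m mp_invsqrt (Ld 1%:M))
  + \tr (rho *m ker_proj (Ld 1%:M)) *: xi.

End QDefs.

(* Main.v *)
Set Warnings "-notation-overridden,-ambiguous-paths".
Require Import Defs.
From HB Require Import structures.
From mathcomp Require Import all_boot all_order all_algebra.
From mathcomp Require Import ring.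
Import Order.TTheory GRing.Theory Num.Theory Num.Def.
Local Open Scope ring_scope.

Section Aux.
Context {C : numClosedFieldType}.
Local Open Scope sesquilinear_scope.

Lemma adjmxM m n p (A : 'M[C]_(m, n)) (B : 'M[C]_(n, p)) :
  adjmx (A *m B) = adjmx B *m adjmx A.
Proof. by rewrite /adjmx trmx_mul map_mxM. Qed.

Lemma adjmxK m n (A : 'M[C]_(m, n)) : adjmx (adjmx A) = A.
Proof. exact: trmxCK. Qed.

Lemma adjmxD m n (A B : 'M[C]_(m, n)) : adjmx (A + B) = adjmx A + adjmx B.
Proof. by apply/matrixP=> i j; rewrite !mxE rmorphD. Qed.

Lemma adjmxN m n (A : 'M[C]_(m, n)) : adjmx (- A) = - adjmx A.
Proof. by apply/matrixP=> i j; rewrite !mxE rmorphN. Qed.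

Lemma adjmxZ m n (a : C) (A : 'M[C]_(m, n)) : adjmx (a *: A) = a^* *: adjmx A.
Proof. by apply/matrixP=> i j; rewrite !mxE rmorphM. Qed.

Lemma adjmx0 m n : adjmx (0 : 'M[C]_(m, n)) = 0.
Proof. by apply/matrixP=> i j; rewrite !mxE rmorph0. Qed.

Lemma adjmx1 n : adjmx (1%:M : 'M[C]_n) = 1%:M.
Proof. by apply/matrixP=> i j; rewrite /adjmx !mxE conjC_nat eq_sym. Qed.

Lemma adjmx_sum m n I (r : seq I) (P : pred I) (F : I -> 'M[C]_(m, n)) :
  adjmx (\sum_(i <- r | P i) F i) = \sum_(i <- r | P i) adjmx (F i).
Proof.
apply: (big_ind2 (fun x y => adjmx x = y)); first exact: adjmx0.
  by move=> x1 x2 y1 y2 <- <-; rewrite adjmxD.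
by [].
Qed.

Lemma adjmx_diag n (D : 'rV[C]_n) : adjmx (diag_mx D) = diag_mx (map_mx conjC D).
Proof.
apply/matrixP=> i j; rewrite !mxE eq_sym; case: eqP => [->|_].
  by rewrite !mulr1n.
by rewrite !mulr0n rmorph0.
Qed.

Lemma entry_delta n (M : 'M[C]_n) i j :
  (delta_mx (0 : 'I_1) i *m M *m adjmx (delta_mx (0 : 'I_1) j)) 0 0 = M i j.
Proof.
have -> : adjmx (delta_mx (0 : 'I_1) j : 'rV[C]_n) = delta_mx j (0 : 'I_1).
  by apply/matrixP=> a b; rewrite /adjmx !mxE conjC_nat andbC.
by rewrite -rowE -colE !mxE.
Qed.

Lemma matrix_entries_eq0 n (M : 'M[C]_n) :
  (forall u v : 'rV[C]_n, (u *m M *m adjmx v) 0 0 = 0) -> M = 0.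
Proof.
by move=> H; apply/matrixP=> i j; rewrite -entry_delta H mxE.
Qed.

Lemma quad_expand n (M : 'M[C]_n) (u w : 'rV[C]_n) (s : C) :
  ((u + s *: w) *m M *m adjmx (u + s *: w)) 0 0 =
  (u *m M *m adjmx u) 0 0 + s * (w *m M *m adjmx u) 0 0
  + s^* * (u *m M *m adjmx w) 0 0 + s * s^* * (w *m M *m adjmx w) 0 0.
Proof.
rewrite adjmxD adjmxZ !mulmxDl !mulmxDr -!scalemxAl -!scalemxAr.
set a := u *m M *m adjmx u; set b := w *m M *m adjmx u.
set c := u *m M *m adjmx w; set e := w *m M *m adjmx w.
rewrite !mxE; ring.
Qed.

Lemma scalar0 (a r : C) :
  (forall t : C, t \is Num.real -> 0 <= a + t * r) -> r = 0.
Proof.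
move=> H; apply/eqP; apply/negPn/negP => r0.
have a0 : 0 <= a by have := H 0 (rpred0 _); rewrite mul0r addr0.
have ar : a \is Num.real by apply: ger0_real.
have rr : r \is Num.real.
  have := H 1 (rpred1 _); rewrite mul1r => /ger0_real h.
  by have := rpredB h ar; rewrite addrC addKr.
have tr : (- (a + 1) / r) \is Num.real.
  by rewrite rpredM ?rpredN ?rpredD ?rpred1 ?rpredV.
have := H _ tr; rewrite mulfVK // opprD addrA addrN add0r.
by rewrite oppr_ge0 ler10.
Qed.

Lemma key_quad (a b c : C) :
  (forall s : C, 0 <= a + s * b + s^* * c) -> b = 0 /\ c = 0.
Proof.
move=> H.
have h1 : b + c = 0.
  apply: (@scalar0 a) => t tr; have := H t.
  by rewrite (conj_Creal tr) -addrA -mulrDr.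
have h2 : 'i * b - 'i * c = 0.
  apply: (@scalar0 a) => t tr; have := H (t * 'i).
  have -> : conjC (t * 'i) = - t * 'i.
    by rewrite rmorphM /= (conj_Creal tr) conjCi mulrN mulNr.
  by congr (_ <= _); ring.
have hb : b = c.
  apply/eqP; rewrite -subr_eq0; apply/eqP.
  have : 'i * (b - c) = 0 by rewrite mulrBr.
  by move/eqP; rewrite mulf_eq0 (negbTE (neq0Ci _)) /= => /eqP.
have : b *+ 2 == 0 by rewrite mulr2n {2}hb h1.
by rewrite mulrn_eq0 /= => /eqP b0; split=> //; rewrite -hb.
Qed.


Section Psd.
Context {n : nat}.
Implicit Types M X : 'M[C]_n.

Lemma psd_real M (v : 'rV[C]_n) : psdmx M -> (v *m M *m adjmx v) 0 0 \is Num.real.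
Proof. by move=> H; apply: ger0_real. Qed.

Lemma psd_diag M i : psdmx M -> 0 <= M i i.
Proof. by move=> H; rewrite -entry_delta. Qed.

Lemma psd_tr_ge0 M : psdmx M -> 0 <= \tr M.
Proof. by move=> H; apply: sumr_ge0 => i _; apply: psd_diag. Qed.

Lemma herm_scalar (a b c e : C) : a \is Num.real -> e \is Num.real ->
  (forall s, (a + s * b + s^* * c + s * s^* * e) \is Num.real) -> b^* = c.
Proof.
move=> ar er H.
have r1 : (b + c) \is Num.real.
  have := H 1; rewrite rmorph1 !mul1r => h.
  have -> : b + c = (a + b + c + e) - a - e by ring.
  by rewrite !rpredB.
have r2 : ('i * b - 'i * c) \is Num.real.
  have := H 'i; rewrite conjCi => h.
  have -> : 'i * b - 'i * c = (a + 'i * b + - 'i * c + 'i * - 'i * e) - a - e.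
    have : 'i * - 'i * e = e.
      by rewrite mulrN -expr2 sqrCi opprK mul1r.
    by move=> ->; ring.
  by rewrite !rpredB.
move: r1 r2; rewrite !CrealE => /eqP E1 /eqP E2.
move: E1 E2; rewrite !rmorphD !rmorphN !rmorphM /= conjCi => E1 E2.
suff : (b^* - c) *+ 2 = 0 by move/eqP; rewrite mulrn_eq0 /= subr_eq0 => /eqP.
have -> : (b^* - c) *+ 2 = (b^* + c^* - (b + c))
   + 'i * (- 'i * b^* + - (- 'i * c^*) - ('i * b - 'i * c))
   + ('i * 'i + 1) * (b^* - c^* + b - c) by ring.
by rewrite E1 E2 -expr2 sqrCi addNr !subrr mul0r mulr0 !addr0.
Qed.

End Psd.
Section Psd2.
Context {n : nat}.
Implicit Types M X : 'M[C]_n.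

Lemma psd_form_herm M (u w : 'rV[C]_n) : psdmx M ->
  ((w *m M *m adjmx u) 0 0)^* = (u *m M *m adjmx w) 0 0.
Proof.
move=> H; refine (herm_scalar _ _ _ _ (psd_real M u H) (psd_real M w H) _).
by move=> s; rewrite -quad_expand; apply: (psd_real M _ H).
Qed.

Lemma psd_herm M : psdmx M -> adjmx M = M.
Proof.
move=> H; apply/matrixP=> i j.
rewrite /adjmx !mxE -(entry_delta _ M j i) -(entry_delta _ M i j).
exact: psd_form_herm.
Qed.

Lemma psd_tr0 M : psdmx M -> \tr M = 0 -> M = 0.
Proof.
move=> H t0.
have d0 : forall i, M i i = 0.
  move: t0; rewrite /mxtrace => /psumr_eq0P t1 i; apply: t1 => //.
  by move=> k _; apply: psd_diag.
apply/matrixP => i j; rewrite mxE.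
pose ei : 'rV[C]_n := delta_mx 0 i; pose ej : 'rV[C]_n := delta_mx 0 j.
have KQ : forall s, 0 <= (ei *m M *m adjmx ei) 0 0 + s * (ej *m M *m adjmx ei) 0 0
   + s^* * (ei *m M *m adjmx ej) 0 0.
  move=> s; have := H (ei + s *: ej).
  rewrite quad_expand; have -> : (ej *m M *m adjmx ej) 0 0 = 0 by rewrite /ej entry_delta d0.
  by rewrite mulr0 addr0.
have [_ c0] := key_quad _ _ _ KQ.
by rewrite -(entry_delta _ M i j).
Qed.

Lemma psd_gram m (G : 'M[C]_(m, n)) : psdmx (adjmx G *m G).
Proof.
move=> v; set w := v *m adjmx G.
have -> : v *m (adjmx G *m G) *m adjmx v = w *m adjmx w.
  by rewrite /w adjmxM adjmxK !mulmxA.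
rewrite mxE; apply: sumr_ge0 => k _; rewrite /adjmx !mxE.
exact: mul_conjC_ge0.
Qed.

End Psd2.

Section Blocks.
Context {d : nat}.

Lemma psd_block1 (M : 'M[C]_d) : psdmx M -> psd_block (n := 1) (fun _ _ => M).
Proof. by move=> H v; rewrite !big_ord1. Qed.

Lemma psd_block1_inv (M : 'M[C]_d) : psd_block (n := 1) (fun _ _ => M) -> psdmx M.
Proof. by move=> H v; have := H (fun _ => v); rewrite !big_ord1. Qed.

Lemma block_conj n (K : 'M[C]_d) (X : 'I_n -> 'I_n -> 'M[C]_d) :
  psd_block X -> psd_block (fun i j => K *m X i j *m adjmx K).
Proof.
move=> H v; have := H (fun i => v i *m K).
congr (_ <= _); apply: eq_bigr => i _; apply: eq_bigr => j _.
by rewrite adjmxM !mulmxA.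
Qed.

Lemma block_add n (X Y : 'I_n -> 'I_n -> 'M[C]_d) :
  psd_block X -> psd_block Y -> psd_block (fun i j => X i j + Y i j).
Proof.
move=> HX HY v.
have -> : \sum_(i < n) \sum_(j < n) (v i *m (X i j + Y i j) *m adjmx (v j)) 0 0 =
  \sum_(i < n) \sum_(j < n) (v i *m X i j *m adjmx (v j)) 0 0 +
  \sum_(i < n) \sum_(j < n) (v i *m Y i j *m adjmx (v j)) 0 0.
  rewrite -big_split; apply: eq_bigr => i _; rewrite -big_split.
  by apply: eq_bigr => j _; rewrite mulmxDr mulmxDl mxE.
exact: addr_ge0.
Qed.

Lemma block_sum n m (X : 'I_m -> 'I_n -> 'I_n -> 'M[C]_d) :
  (forall k, psd_block (X k)) -> psd_block (fun i j => \sum_(k < m) X k i j).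
Proof.
move=> H v.
have -> : \sum_(i < n) \sum_(j < n) (v i *m (\sum_(k < m) X k i j) *m adjmx (v j)) 0 0 =
  \sum_(k < m) \sum_(i < n) \sum_(j < n) (v i *m X k i j *m adjmx (v j)) 0 0.
  rewrite [RHS]exchange_big; apply: eq_bigr => i _ /=; rewrite [RHS]exchange_big.
  apply: eq_bigr => j _ /=; rewrite mulmx_sumr mulmx_suml summxE.
  by [].
by apply: sumr_ge0 => k _; apply: H.
Qed.

Lemma block_gram n (K : 'M[C]_d) (W : 'I_n -> 'M[C]_d) :
  psdmx K -> psd_block (fun i j => adjmx (W i) *m K *m W j).
Proof.
move=> H v; set u := \sum_(i < n) v i *m adjmx (W i).
have := H u; congr (_ <= _).
rewrite /u adjmx_sum mulmx_suml mulmx_suml summxE; apply: eq_bigr => i _.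
rewrite mulmx_sumr summxE; apply: eq_bigr => j _.
by rewrite adjmxM adjmxK !mulmxA.
Qed.

Lemma block2_zero (X : 'I_2 -> 'I_2 -> 'M[C]_d) :
  psd_block X -> X ord0 ord0 = 0 ->
  X ord0 ord_max = 0 /\ X ord_max ord0 = 0.
Proof.
move=> H X0.
have E : forall (w u : 'rV[C]_d), (w *m X ord0 ord_max *m adjmx u) 0 0 = 0 /\
                                 (u *m X ord_max ord0 *m adjmx w) 0 0 = 0.
  move=> w u; apply: (@key_quad ((u *m X ord_max ord_max *m adjmx u) 0 0)) => s.
  have := H (fun i : 'I_2 => if i == ord0 then s *: w else u).
  rewrite !big_ord_recl !big_ord0 !addr0.
  have -> : (lift ord0 (@ord0 0)) = (ord_max : 'I_2) by apply: val_inj.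
  rewrite eqxx /= X0 mulmx0 mul0mx mxE add0r.
  rewrite adjmxZ -!scalemxAl -!scalemxAr.
  set b := w *m X ord0 ord_max *m adjmx u.
  set c := u *m X ord_max ord0 *m adjmx w.
  set a := u *m X ord_max ord_max *m adjmx u.
  rewrite !mxE => h; apply: (le_trans h); rewrite le_eqVlt; apply/orP; left.
  apply/eqP; ring.
split; apply: matrix_entries_eq0 => w u; first by case: (E w u).
by case: (E u w).
Qed.

End Blocks.


Section Spec.
Context {n : nat}.
Variable A : 'M[C]_n.
Hypothesis hA : A \is normalmx.
Local Notation P := (spectralmx A).
Local Notation D := (spectral_diag A).

Lemma PU : P *m adjmx P = 1%:M.
Proof. exact/unitarymxP/spectral_unitarymx. Qed.

Lemma UP : adjmx P *m P = 1%:M.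
Proof. by rewrite /adjmx -invmx_unitary ?spectral_unitarymx // mulVmx // spectral_unit. Qed.

Lemma mxfunE f : mxfun f A = adjmx P *m diag_mx (map_mx f D) *m P.
Proof. by rewrite /mxfun invmx_unitary // spectral_unitarymx. Qed.

Lemma mxfun_id : mxfun (fun x => x) A = A.
Proof. by rewrite /mxfun map_mx_id //; apply/esym/orthomx_spectralP. Qed.

Lemma Aeq : A = adjmx P *m diag_mx D *m P.
Proof. by rewrite -{1}mxfun_id mxfunE map_mx_id. Qed.

Lemma mxfun_ext f g : (forall i, f (D 0 i) = g (D 0 i)) -> mxfun f A = mxfun g A.
Proof.
move=> H; rewrite /mxfun; congr (_ *m diag_mx _ *m _).
by apply/matrixP => i j; rewrite !mxE ord1; exact: H.
Qed.

Lemma mxfunM f g : mxfun f A *m mxfun g A = mxfun (fun x => f x * g x) A.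
Proof.
rewrite !mxfunE.
have -> : adjmx P *m diag_mx (map_mx f D) *m P *m (adjmx P *m diag_mx (map_mx g D) *m P)
  = adjmx P *m diag_mx (map_mx f D) *m (P *m adjmx P) *m diag_mx (map_mx g D) *m P.
  by rewrite !mulmxA.
rewrite PU mulmx1 -(mulmxA (adjmx P)) mulmx_diag; congr (_ *m diag_mx _ *m _).
by apply/rowP => j; rewrite !mxE.
Qed.

Lemma mxfunMA f : mxfun f A *m A = mxfun (fun x => f x * x) A.
Proof. by rewrite -[X in _ *m X]mxfun_id mxfunM. Qed.

Lemma sc0 : (0 : C)%:M = 0 :> 'M[C]_n.
Proof. by apply/matrixP => i j; rewrite !mxE mul0rn. Qed.

Lemma mxfun_const c : mxfun (fun _ => c) A = c%:M.
Proof.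
rewrite mxfunE.
have -> : diag_mx (map_mx (fun _ => c) D) = c%:M by apply/matrixP => i j; rewrite !mxE.
by rewrite mul_mx_scalar -scalemxAl UP scalemx1.
Qed.

Lemma mxfunD f g : mxfun (fun x => f x + g x) A = mxfun f A + mxfun g A.
Proof.
rewrite !mxfunE -mulmxDl -mulmxDr; congr (_ *m _ *m _).
by apply/matrixP => i j; rewrite !mxE mulrnDl.
Qed.

Lemma adjmx_mxfun f : adjmx (mxfun f A) = mxfun (fun x => (f x)^*) A.
Proof.
rewrite !mxfunE !adjmxM adjmxK adjmx_diag mulmxA; congr (_ *m diag_mx _ *m _).
by apply/matrixP => i j; rewrite !mxE.
Qed.

Lemma mxfun_gram f : mxfun (fun x => (f x)^* * f x) A =
  adjmx (diag_mx (map_mx f D) *m P) *m (diag_mx (map_mx f D) *m P).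
Proof.
rewrite mxfunE adjmxM adjmx_diag !mulmxA -(mulmxA _ (diag_mx _) (diag_mx _)) mulmx_diag.
by congr (_ *m diag_mx _ *m _); apply/rowP => j; rewrite !mxE.
Qed.

Lemma diag_psd : psdmx A -> forall i, 0 <= D 0 i.
Proof.
move=> H i.
have E : P *m A *m adjmx P = diag_mx D.
  rewrite [X in _ *m X *m adjmx _]Aeq.
  by rewrite !mulmxA PU mul1mx -mulmxA PU mulmx1.
have := H (row i P); rewrite rowE.
pose ei : 'rV[C]_n := delta_mx 0 i.
have -> : ei *m P *m A *m adjmx (ei *m P) = ei *m (P *m A *m adjmx P) *m adjmx ei.
  by rewrite adjmxM !mulmxA.
by rewrite E entry_delta mxE eqxx mulr1n.
Qed.

Lemma ker_projE : ker_proj A = mxfun (fun x => (x == 0)%:R) A.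
Proof.
rewrite /ker_proj.
suff E : P *m proj_ortho (kermx A) = diag_mx (map_mx (fun x => (x == 0)%:R) D) *m P.
  by rewrite mxfunE -mulmxA -E mulmxA UP mul1mx.
apply/row_matrixP => i; rewrite !row_mul row_diag_mx -scalemxAl -rowE !mxE.
case: eqP => Di.
  rewrite scale1r; apply: proj_ortho_id; apply/sub_kermxP.
  rewrite [X in _ *m X]Aeq !mulmxA -row_mul PU row1 -rowE row_diag_mx Di.
  by rewrite scale0r mul0mx.
rewrite scale0r; apply: proj_ortho_0; apply/orthomx1P.
change (row i P *m adjmx (kermx A) = 0).
set K := kermx A.
have hK : K *m A = 0 := mulmx_ker A.
rewrite [X in _ *m X]Aeq in hK.
have hK2 : K *m adjmx P *m diag_mx D = 0.
  have -> : K *m adjmx P *m diag_mx D = K *m (adjmx P *m diag_mx D *m P) *m adjmx P.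
    by rewrite !mulmxA -(mulmxA _ P) PU mulmx1.
  by rewrite hK mul0mx.
rewrite -[row i P]adjmxK -adjmxM.
suff -> : K *m adjmx (row i P) = 0 by rewrite adjmx0.
have -> : adjmx (row i P) = col i (adjmx P) by rewrite /adjmx tr_row map_col.
rewrite colE mulmxA -colE.
apply/matrixP => a b; rewrite [LHS]mxE [RHS]mxE.
have := congr1 (fun M : 'M[C]_n => M a i) hK2; rewrite mul_mx_diag [LHS]mxE [RHS]mxE => /eqP.
by rewrite mulf_eq0 => /orP [/eqP h|/eqP //].
Qed.

End Spec.


Section More.
Context {n : nat}.
Implicit Types M X : 'M[C]_n.

Lemma psd_scale (a : C) M : 0 <= a -> psdmx M -> psdmx (a *: M).
Proof.
move=> a0 H v; rewrite -scalemxAr -scalemxAl mxE.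
exact: mulr_ge0.
Qed.

Lemma psd_add M1 M2 : psdmx M1 -> psdmx M2 -> psdmx (M1 + M2).
Proof.
by move=> H1 H2 v; rewrite mulmxDr mulmxDl mxE; apply: addr_ge0.
Qed.

Lemma psd_conj (K : 'M[C]_n) M : psdmx M -> psdmx (K *m M *m adjmx K).
Proof.
move=> H v; have := H (v *m K).
by rewrite adjmxM !mulmxA.
Qed.

Lemma psd_normal M : psdmx M -> M \is normalmx.
Proof.
move=> H; apply/normalmxP.
change (M *m adjmx M = adjmx M *m M).
by rewrite psd_herm.
Qed.

Lemma psd_gram_decomp M : psdmx M -> exists G : 'M[C]_n, M = adjmx G *m G.
Proof.
move=> H; have N := @psd_normal M H.
exists (diag_mx (map_mx sqrtC (spectral_diag M)) *m spectralmx M).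
rewrite -mxfun_gram -{1}(mxfun_id M N); apply: mxfun_ext => i.
have h := diag_psd M N H i.
rewrite conj_Creal ?sqrtC_real // -expr2 sqrtCK.
by [].
Qed.

Lemma block_ext m (X Y : 'I_m -> 'I_m -> 'M[C]_n) :
  (forall i j, X i j = Y i j) -> psd_block X -> psd_block Y.
Proof.
move=> E H v; have := H v; congr (_ <= _); apply: eq_bigr => i _.
by apply: eq_bigr => j _; rewrite E.
Qed.

Lemma tr_gram_sum (G0 X : 'M[C]_n) : \tr (X *m (adjmx G0 *m G0)) =
  \sum_k (row k G0 *m X *m adjmx (row k G0)) 0 0.
Proof.
rewrite mulmxA mxtrace_mulC mulmxA.
rewrite /mxtrace; apply: eq_bigr => k _.
by rewrite -(entry_delta _ (G0 *m X *m adjmx G0) k k) !rowE adjmxM !mulmxA.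
Qed.

Lemma gram_rows (G : 'M[C]_n) : adjmx G *m G = \sum_l adjmx (row l G) *m row l G.
Proof.
apply/matrixP => a b; rewrite summxE !mxE; apply: eq_bigr => l _.
by rewrite !mxE big_ord1 !mxE.
Qed.

Lemma trace_term_kraus (G0 G X : 'M[C]_n) :
  \tr (X *m (adjmx G0 *m G0)) *: (adjmx G *m G) =
  \sum_k \sum_l ((adjmx (row l G) *m row k G0) *m X *m
                  adjmx (adjmx (row l G) *m row k G0)).
Proof.
rewrite tr_gram_sum gram_rows scaler_suml; apply: eq_bigr => k _.
rewrite scaler_sumr; apply: eq_bigr => l _.
rewrite adjmxM adjmxK.
set g := row l G; set r := row k G0.
have -> : adjmx g *m r *m X *m (adjmx r *m g) = adjmx g *m (r *m X *m adjmx r) *m g.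
  by rewrite !mulmxA.
by rewrite [in RHS](mx11_scalar (r *m X *m adjmx r)) mul_mx_scalar -scalemxAl.
Qed.

End More.

End Aux.

Theorem proposition2 (C : numClosedFieldType) (d : nat) (hd : (1 < d)%N)
  (L Ld : 'M[C]_d -> 'M[C]_d) (xi : 'M[C]_d) :
  quantum_operation L Ld ->
  Ld 1%:M != 0 ->
  normalized_image L xi ->
  quantum_channel (Phi L Ld xi) /\
  (forall sigma : 'M[C]_d,
     normalized_image L sigma <->
     exists rho : 'M[C]_d, density rho /\ sigma = Phi L Ld xi rho).
Proof.
move=> [hlin hcp hdual hle] hnz [rho2 [[hr2 tr2] ht2 hxi]].
have L0 : L 0 = 0.
  have h := hlin 1 0 0; rewrite !scale1r addr0 in h.
  by apply: (@addrI _ (L 0)); rewrite -h addr0.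
have LZ : forall a X, L (a *: X) = a *: L X.
  by move=> a X; have := hlin a X 0; rewrite !addr0 L0 addr0.
have LD : forall X Y, L (X + Y) = L X + L Y.
  by move=> X Y; have := hlin 1 X Y; rewrite !scale1r.
have LB : forall X Y, L (X - Y) = L X - L Y.
  by move=> X Y; rewrite -scaleN1r LD LZ scaleN1r.
set A := Ld 1%:M.
have trL : forall X, \tr (L X) = \tr (X *m A).
  by move=> X; rewrite -(hdual X 1%:M) mulmx1.
have Lpsd : forall X, psdmx X -> psdmx (L X).
  move=> X hX; apply: psd_block1_inv; apply: (hcp 1%N (fun _ _ => X)).
  exact: psd_block1.
have Apsd : psdmx A.
  move=> v.
  have -> : (v *m A *m adjmx v) 0 0 = \tr (L (adjmx v *m v)).
    rewrite trL.
    have -> : \tr (adjmx v *m v *m A) = \tr (v *m A *m adjmx v).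
      by rewrite -mulmxA mxtrace_mulC.
    by rewrite trace_mx11.
  by apply: psd_tr_ge0; apply: Lpsd; apply: psd_gram.
have hAn : A \is normalmx := psd_normal A Apsd.
have Dge0 := diag_psd A hAn Apsd.
pose f := fun x : C => if x == 0 then 0 else (sqrtC x)^-1.
pose z := fun x : C => (x == 0)%:R : C.
pose B := mxfun f A.
pose Pi := mxfun z A.
have PhiE : forall X, Phi L Ld xi X = L (B *m X *m B) + \tr (X *m Pi) *: xi.
  by move=> X; rewrite /Phi -/A (ker_projE A hAn).
have freal : forall i, (f (spectral_diag A 0 i))^* = f (spectral_diag A 0 i).
  move=> i; rewrite /f; case: eqP => _; first by rewrite conjC0.
  by rewrite conj_Creal // rpredV sqrtC_real.
have Badj : adjmx B = B.
  by rewrite /B adjmx_mxfun; apply: mxfun_ext => i; rewrite freal.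
have BABP : B *m A *m B + Pi = 1%:M.
  rewrite /B (mxfunMA A hAn) (mxfunM A) /Pi -mxfunD -(mxfun_const A 1).
  apply: mxfun_ext => i; rewrite /f /z; case: eqP => [->|nz].
    by rewrite !mul0r add0r.
  have s0 : sqrtC (spectral_diag A 0 i) != 0 by rewrite sqrtC_eq0; apply/eqP.
  rewrite mulr0n addr0 -{2}[spectral_diag A 0 i]sqrtCK expr2.
  by rewrite mulrA mulVf // mul1r mulfV.
pose G0 := diag_mx (map_mx z (spectral_diag A)) *m spectralmx A.
have Gpi : Pi = adjmx G0 *m G0.
  rewrite /G0 -mxfun_gram /Pi; apply: mxfun_ext => i; rewrite /z.
  by case: eqP => _; rewrite ?mulr1n ?mulr0n ?conjC1 ?conjC0 ?mulr1 ?mulr0.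
have Pipsd : psdmx Pi by rewrite Gpi; apply: psd_gram.
pose t2 := \tr (L rho2).
have t2pos : 0 < t2 by rewrite lt_def ht2 /=; apply: psd_tr_ge0; apply: Lpsd.
have xipsd : psdmx xi.
  rewrite hxi /normalized; apply: psd_scale; last exact: Lpsd.
  by rewrite invr_ge0 ltW.
have xitr : \tr xi = 1 by rewrite hxi /normalized mxtraceZ mulVf.
have [G hG] := psd_gram_decomp xi xipsd.
have tp : forall X, \tr (Phi L Ld xi X) = \tr X.
  move=> X; rewrite PhiE mxtraceD mxtraceZ xitr mulr1 trL.
  have -> : \tr (B *m X *m B *m A) = \tr (X *m (B *m A *m B)).
    have -> : B *m X *m B *m A = B *m (X *m B *m A) by rewrite !mulmxA.
    by rewrite mxtrace_mulC !mulmxA.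
  by rewrite -mxtraceD -mulmxDr BABP mulmx1.
split.
  split.
  - move=> a X Y; rewrite !PhiE.
    have -> : B *m (a *: X + Y) *m B = a *: (B *m X *m B) + B *m Y *m B.
      by rewrite mulmxDr mulmxDl -scalemxAr -scalemxAl.
    rewrite hlin mulmxDl -scalemxAl mxtraceD mxtraceZ scalerDl -scalerA.
    by rewrite scalerDr addrACA.
  - move=> m X hX.
    pose K := fun k l : 'I_d => adjmx (row l G) *m row k G0.
    apply: (@block_ext _ _ _ (fun i j => L (B *m X i j *m adjmx B) +
       \sum_(k < d) \sum_(l < d) (K k l *m X i j *m adjmx (K k l)))).
      by move=> i j; rewrite PhiE Badj Gpi hG trace_term_kraus.
    apply: block_add; first by apply: hcp; apply: block_conj.
    apply: (@block_sum _ _ _ _ (fun k i j => \sum_(l < d) (K k l *m X i j *m adjmx (K k l)))) => k.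
    apply: (@block_sum _ _ _ _ (fun l i j => K k l *m X i j *m adjmx (K k l))) => l.
    exact: block_conj.
  - exact: tp.
have LPi0 : L Pi = 0.
  apply: psd_tr0; first exact: Lpsd.
  rewrite trL /Pi (mxfunMA A hAn).
  rewrite (@mxfun_ext _ _ A _ (fun _ => 0)); first by rewrite mxfun_const sc0 mxtrace0.
  by move=> i; rewrite /z; case: eqP => [->|]; rewrite ?mulr0 ?mulr0n ?mul0r.
have kerL : forall Y, L (Pi *m Y) = 0 /\ L (adjmx Y *m Pi) = 0.
  move=> Y.
  pose W := fun i : 'I_2 => if i == ord0 then 1%:M else Y.
  have hb := hcp 2%N _ (@block_gram _ _ 2 Pi W Pipsd).
  have X0 : L (adjmx (W ord0) *m Pi *m W ord0) = 0.
    by rewrite /W /= adjmx1 mul1mx mulmx1.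
  have [] := block2_zero _ hb X0.
  by rewrite /W /= adjmx1 mul1mx mulmx1 => -> ->.
have LR : forall X, L ((1%:M - Pi) *m X *m (1%:M - Pi)) = L X.
  move=> X.
  rewrite mulmxBl mul1mx mulmxBr mulmx1 mulmxBl -mulmxA !LB.
  have [-> _] := kerL X.
  have [-> _] := kerL (X *m Pi).
  have [_ h] := kerL (adjmx X); rewrite adjmxK in h; rewrite h.
  by rewrite !subr0.
move=> sigma; split.
  move=> [rho [[hr trr] ht ->]].
  pose t := \tr (L rho).
  have tpos : 0 < t by rewrite lt_def ht /=; apply: psd_tr_ge0; apply: Lpsd.
  pose S := mxfun sqrtC A.
  have Sadj : adjmx S = S.
    rewrite /S adjmx_mxfun; apply: mxfun_ext => i.
    by rewrite conj_Creal // sqrtC_real.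
  have SS : S *m S = A.
    rewrite /S (mxfunM A) -[RHS](mxfun_id A hAn); apply: mxfun_ext => i.
    by rewrite -expr2 sqrtCK.
  have BSP : B *m S + Pi = 1%:M.
    rewrite /B /S (mxfunM A) /Pi -mxfunD -(mxfun_const A 1).
    apply: mxfun_ext => i; rewrite /f /z; case: eqP => [->|nz].
      by rewrite sqrtC0 !mul0r add0r.
    have s0 : sqrtC (spectral_diag A 0 i) != 0 by rewrite sqrtC_eq0; apply/eqP.
    by rewrite mulr0n addr0 mulVf.
  have SBP : S *m B + Pi = 1%:M.
    rewrite /B /S (mxfunM A) /Pi -mxfunD -(mxfun_const A 1).
    apply: mxfun_ext => i; rewrite /f /z; case: eqP => [->|nz].
      by rewrite sqrtC0 !mul0r add0r.
    have s0 : sqrtC (spectral_diag A 0 i) != 0 by rewrite sqrtC_eq0; apply/eqP.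
    by rewrite mulr0n addr0 mulfV.
  have BS : B *m S = 1%:M - Pi by rewrite -BSP addrK.
  have SB : S *m B = 1%:M - Pi by rewrite -SBP addrK.
  have SPi : S *m Pi = 0.
    rewrite /S /Pi (mxfunM A) (@mxfun_ext _ _ A _ (fun _ => 0)).
      by rewrite mxfun_const sc0.
    by move=> i; rewrite /z; case: eqP => [->|]; rewrite ?sqrtC0 ?mulr0n ?mulr0 ?mul0r.
  exists (t^-1 *: (S *m rho *m S)); split.
    split.
      apply: psd_scale; first by rewrite invr_ge0 ltW.
      by rewrite -[X in _ *m X]Sadj; apply: psd_conj.
    rewrite mxtraceZ.
    have -> : \tr (S *m rho *m S) = \tr (rho *m (S *m S)).
      by rewrite -mulmxA mxtrace_mulC -mulmxA.
    by rewrite SS -trL mulVf // gt_eqF.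
  rewrite PhiE /normalized.
  have -> : B *m (t^-1 *: (S *m rho *m S)) *m B =
            t^-1 *: ((1%:M - Pi) *m rho *m (1%:M - Pi)).
    by rewrite -{1}BS -SB -scalemxAr -scalemxAl !mulmxA.
  rewrite -scalemxAl mxtraceZ -(mulmxA (S *m rho)) SPi mulmx0 mxtrace0 mulr0 scale0r addr0.
  by rewrite LZ LR.
move=> [rho [[hr trr] ->]].
pose q := \tr (rho *m Pi).
pose c := q / t2.
pose M := B *m rho *m B + c *: rho2.
have LM : L M = Phi L Ld xi rho.
  by rewrite PhiE /M LD LZ hxi /normalized -/t2 scalerA.
have qge0 : 0 <= q.
  rewrite /q Gpi tr_gram_sum; apply: sumr_ge0 => k _; exact: hr.
have Mpsd : psdmx M.
  apply: psd_add.
    by rewrite -[X in _ *m X]Badj; apply: psd_conj.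
  by apply: psd_scale => //; apply: divr_ge0 => //; apply: ltW.
have trLM : \tr (L M) = 1 by rewrite LM tp trr.
pose tau := \tr M.
have tau0 : tau != 0.
  apply/eqP => h0; have M0 := psd_tr0 M Mpsd h0.
  by move: trLM; rewrite M0 L0 mxtrace0 => /eqP; rewrite eq_sym oner_eq0.
have taupos : 0 < tau by rewrite lt_def tau0 /=; apply: psd_tr_ge0.
exists (tau^-1 *: M); split.
  split.
    by apply: psd_scale => //; rewrite invr_ge0 ltW.
  by rewrite mxtraceZ mulVf.
  by rewrite LZ mxtraceZ trLM mulr1 invr_eq0.
by rewrite /normalized LZ mxtraceZ trLM mulr1 invrK scalerA mulfV // scale1r LM.
Qed.
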